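(* Let $F^\pm\in\mathcal E(\lambda,\Lambda)$, let $f^\pm$ be uniformly continuous on $B_1^\pm$ and $g$ uniformly continuous on $T$. Let $u$ be a bounded viscosity subsolution of the flat problem (FP). Fix $0<\rho<1$. Then for every sufficiently small $\varepsilon>0$, the upper $\varepsilon$-envelope $u^\varepsilon$ is a viscosity subsolution of $$F^\pm(D^2u^\varepsilon)=f^\pm_\varepsilon\ \text{in }B_r^\pm,\qquad (u^\varepsilon)^+_{x_n}-(u^\varepsilon)^-_{x_n}=g_\varepsilon\ \text{on }T_r=B_r\cap\{x_n=0\},$$ for any $r\le\rho-r_\varepsilon$, where $r_\varepsilon=(2\varepsilon\|u\|_{L^\infty(B_1)})^{1/2}$, $f^\pm_\varepsilon=f^\pm-\omega_{f^\pm}(r_\varepsilon)$ and $g_\varepsilon=g-\omega_g(r_\varepsilon)$.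
   Context: $\mathcal E(\lambda,\Lambda)$: $F:\mathcal S^n\to\mathbb R$ with $F(0)=0$ and $\lambda\|N\|\le F(M+N)-F(M)\le\Lambda\|N\|$ for $N\ge0$. Flat setting: $B_r^\pm=B_r\cap\{\pm x_n>0\}$, $T=B_1\cap\{x_n=0\}$; (FP): $F^\pm(D^2u)=f^\pm$ in $B_1^\pm$, $u^+_{x_n}-u^-_{x_n}=g$ on $T$. Viscosity subsolution of (FP): $u$ USC such that for $\varphi$ touching $u$ from above at $x_0$: if $x_0\in B_1^\pm$ and $\varphi$ is $C^2$ near $x_0$ then $F^\pm(D^2\varphi(x_0))\ge f^\pm(x_0)$; if $x_0\in T$ and $\varphi$ is continuous with restrictions $\varphi^\pm$ to $\overline{B_\delta(x_0)\cap\{\pm x_n>0\}}$ of class $C^2$, then $\varphi^+_{x_n}(x_0)-\varphi^-_{x_n}(x_0)\ge g(x_0)$ (the same notion on $B_r$, $T_r$ with $f_\varepsilon^\pm,g_\varepsilon$). Upper $\varepsilon$-envelope in the $x'$-direction: for $y=(y',y_n)\in\overline{B_\rho}$, $u^\varepsilon(y',y_n)=\sup\{u(x',y_n)-\frac1\varepsilon|x'-y'|^2:(x',y_n)\in\overline{B_\rho}\}$. Modulus of continuity: $\omega_h(r)=\sup_{|x-y|\le r}|h(x)-h(y)|$. *)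

(* Defs.v *)
(* Points of R^d are row vectors 'rV[R]_d.
   The dimension is d = n.+1 (so d >= 1); the last coordinate (index ord_max)
   plays the role of x_n. *)
From HB Require Import structures.
From mathcomp Require Import all_boot all_order all_algebra.
From mathcomp Require Import all_classical all_reals all_analysis.
Set Implicit Arguments. Unset Strict Implicit. Unset Printing Implicit Defensive.
Import Order.TTheory GRing.Theory Num.Theory.
Import numFieldNormedType.Exports.
Local Open Scope classical_set_scope.
Local Open Scope ring_scope.

Section Defs.
Variables (R : realType) (n : nat).
Local Notation pt := 'rV[R]_n.+1.

Definition xn (x : pt) : R := x 0 ord_max.

Definition enorm (x : pt) : R := Num.sqrt (\sum_i x 0 i ^+ 2).

Definition dist'2 (x y : pt) : R :=
  \sum_(i < n.+1 | i != ord_max) (x 0 i - y 0 i) ^+ 2.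

Definition eball (c : pt) (r : R) : set pt := [set x | enorm (x - c) < r].
Definition ecball (c : pt) (r : R) : set pt := [set x | enorm (x - c) <= r].

Definition Bplus (r : R) : set pt := [set x | enorm x < r /\ 0 < xn x].
Definition Bminus (r : R) : set pt := [set x | enorm x < r /\ xn x < 0].
Definition Tflat (r : R) : set pt := [set x | enorm x < r /\ xn x = 0].

Definition symmetric (M : 'M[R]_n.+1) : Prop := M^T = M.
Definition psd (N : 'M[R]_n.+1) : Prop := forall v : pt, 0 <= (v *m N *m v^T) 0 0.

Definition opnorm (N : 'M[R]_n.+1) : R :=
  sup [set enorm (N *m v^T)^T | v in [set v : pt | enorm v = 1]].

(* F in E(lambda, Lambda), F : S^n -> R (only values on symmetric matrices matter) *)
Definition elliptic (lam Lam : R) (F : 'M[R]_n.+1 -> R) : Prop :=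
  F 0 = 0 /\
  forall M N : 'M[R]_n.+1, symmetric M -> symmetric N -> psd N ->
    lam * opnorm N <= F (M + N) - F M /\ F (M + N) - F M <= Lam * opnorm N.

Definition ebase (i : 'I_n.+1) : pt := delta_mx 0 i.

Definition pderiv (i : 'I_n.+1) (phi : pt -> R) : pt -> R :=
  fun x => derive phi x (ebase i).

Definition C2_on (U : set pt) (phi : pt -> R) : Prop :=
  forall x, U x -> forall i j : 'I_n.+1,
    derivable phi x (ebase i) /\
    derivable (pderiv i phi) x (ebase j) /\
    {for x, continuous (pderiv j (pderiv i phi))}.

Definition hessian (phi : pt -> R) (x : pt) : 'M[R]_n.+1 :=
  \matrix_(i, j) pderiv j (pderiv i phi) x.

Definition usc_on (D : set pt) (u : pt -> R) : Prop :=
  forall x, D x -> forall e : R, 0 < e -> exists2 d : R, 0 < d &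
    forall y, D y -> enorm (y - x) < d -> u y < u x + e.

Definition touches_above (D : set pt) (u phi : pt -> R) (x0 : pt) (d : R) : Prop :=
  phi x0 = u x0 /\ forall y, D y -> eball x0 d y -> u y <= phi y.

Definition visc_sub (Fp Fm : 'M[R]_n.+1 -> R) (fp fm g : pt -> R) (r : R)
    (u : pt -> R) : Prop :=
  usc_on (eball 0 r) u /\
  (forall x0 phi d, Bplus r x0 -> 0 < d -> C2_on (eball x0 d) phi ->
     touches_above (eball 0 r) u phi x0 d -> fp x0 <= Fp (hessian phi x0)) /\
  (forall x0 phi d, Bminus r x0 -> 0 < d -> C2_on (eball x0 d) phi ->
     touches_above (eball 0 r) u phi x0 d -> fm x0 <= Fm (hessian phi x0)) /\
  (forall x0 phi d (psip psim : pt -> R) d', Tflat r x0 -> 0 < d -> d < d' ->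
     {in eball x0 d, continuous phi} ->
     (* phi^+ : restriction to closure(B_d(x0) /\ {x_n > 0}) is C^2 (extends to C^2) *)
     C2_on (eball x0 d') psip ->
     (forall y, ecball x0 d y -> 0 <= xn y -> phi y = psip y) ->
     (* phi^- : restriction to closure(B_d(x0) /\ {x_n < 0}) is C^2 *)
     C2_on (eball x0 d') psim ->
     (forall y, ecball x0 d y -> xn y <= 0 -> phi y = psim y) ->
     touches_above (eball 0 r) u phi x0 d ->
     g x0 <= pderiv ord_max psip x0 - pderiv ord_max psim x0).

Definition unif_cont_on (D : set pt) (h : pt -> R) : Prop :=
  forall e : R, 0 < e -> exists2 d : R, 0 < d &
    forall x y, D x -> D y -> enorm (x - y) < d -> `|h x - h y| < e.

Definition modulus (D : set pt) (h : pt -> R) (r : R) : R :=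
  sup [set z | exists x y, [/\ D x, D y, enorm (x - y) <= r & z = `|h x - h y| ]].

Definition supnorm1 (u : pt -> R) : R := sup [set `|u x| | x in eball 0 1].

Definition uenv (u : pt -> R) (rho eps : R) (y : pt) : R :=
  sup [set u x - dist'2 x y / eps |
         x in [set x | ecball 0 rho x /\ xn x = xn y]].

End Defs.

(* Main.v *)
Require Import Defs.
From HB Require Import structures.
From mathcomp Require Import all_boot all_order all_algebra.
From mathcomp Require Import all_classical all_reals all_analysis.
From mathcomp Require Import ring lra zify.
Import Order.TTheory GRing.Theory Num.Theory.
Import numFieldNormedType.Exports.
Local Open Scope classical_set_scope.
Local Open Scope ring_scope.

Section Aux.
Variables (R : realType) (n : nat).
Local Notation pt := 'rV[R]_n.+1.
Implicit Types x y z : pt.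

Lemma sumsq_ge0 x : 0 <= \sum_i x 0 i ^+ 2.
Proof. by apply: sumr_ge0 => i _; rewrite sqr_ge0. Qed.

Lemma enorm_ge0 x : 0 <= enorm x.
Proof. exact: sqrtr_ge0. Qed.

Lemma enorm2 x : enorm x ^+ 2 = \sum_i x 0 i ^+ 2.
Proof. by rewrite /enorm sqr_sqrtr // sumsq_ge0. Qed.

Lemma coord_le_enorm x i : `|x 0 i| <= enorm x.
Proof.
rewrite -sqrtr_sqr /enorm ler_wsqrtr // (bigD1 i) //= lerDl.
by apply: sumr_ge0 => j _; rewrite sqr_ge0.
Qed.

Lemma enormN x : enorm (- x) = enorm x.
Proof. by rewrite /enorm; congr Num.sqrt; apply: eq_bigr => i _; rewrite mxE sqrrN. Qed.

Lemma enormB x y : enorm (x - y) = enorm (y - x).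
Proof. by rewrite -enormN opprB. Qed.

Lemma enorm0 : enorm (0 : pt) = 0.
Proof.
rewrite /enorm big1 ?sqrtr0 // => i _; by rewrite mxE expr0n.
Qed.

Lemma CS x y : (\sum_i x 0 i * y 0 i) ^+ 2 <=
  (\sum_i x 0 i ^+ 2) * (\sum_i y 0 i ^+ 2).
Proof.
have H : 0 <= \sum_i \sum_j (x 0 i * y 0 j - x 0 j * y 0 i) ^+ 2.
  by apply: sumr_ge0 => i _; apply: sumr_ge0 => j _; rewrite sqr_ge0.
have E : \sum_i \sum_j (x 0 i * y 0 j - x 0 j * y 0 i) ^+ 2 =
   2 * ((\sum_i x 0 i ^+ 2) * (\sum_i y 0 i ^+ 2) - (\sum_i x 0 i * y 0 i) ^+ 2).
  have E1 : forall i j, (x 0 i * y 0 j - x 0 j * y 0 i) ^+ 2 =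
     x 0 i ^+ 2 * y 0 j ^+ 2 + x 0 j ^+ 2 * y 0 i ^+ 2
     - 2 * ((x 0 i * y 0 i) * (x 0 j * y 0 j)).
    by move=> i j; ring.
  under eq_bigr => i _ do under eq_bigr => j _ do rewrite E1.
  under eq_bigr => i _ do rewrite sumrB big_split /=.
  rewrite sumrB big_split /=.
  have A1 : \sum_i \sum_j x 0 i ^+ 2 * y 0 j ^+ 2 =
      (\sum_i x 0 i ^+ 2) * (\sum_i y 0 i ^+ 2).
    by rewrite mulr_suml; apply: eq_bigr => i _; rewrite mulr_sumr.
  have A2 : \sum_i \sum_j x 0 j ^+ 2 * y 0 i ^+ 2 =
      (\sum_i x 0 i ^+ 2) * (\sum_i y 0 i ^+ 2).
    rewrite mulrC mulr_suml; apply: eq_bigr => i _; rewrite mulr_sumr.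
    by apply: eq_bigr => j _; rewrite mulrC.
  have A3 : \sum_i \sum_j 2 * (x 0 i * y 0 i * (x 0 j * y 0 j)) =
      2 * (\sum_i x 0 i * y 0 i) ^+ 2.
    set S := \sum_i x 0 i * y 0 i.
    rewrite (eq_bigr (fun i => 2 * (x 0 i * y 0 i) * S)); last first.
      move=> i _; rewrite /S mulr_sumr; apply: eq_bigr => j _; ring.
    by rewrite -mulr_suml -mulr_sumr -/S expr2 mulrA.
  rewrite A1 A2 A3; ring.
move: H; rewrite E pmulr_rge0 // subr_ge0 //.
Qed.

Lemma enormD x y : enorm (x + y) <= enorm x + enorm y.
Proof.
have hx := enorm_ge0 x; have hy := enorm_ge0 y.
rewrite {1}/enorm -(ger0_norm (addr_ge0 hx hy)) -sqrtr_sqr ler_wsqrtr //.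
have S : \sum_i x 0 i * y 0 i <= enorm x * enorm y.
  rewrite -(ger0_norm (mulr_ge0 hx hy)) -sqrtr_sqr exprMn !enorm2.
  apply: le_trans (ler_norm _) _; rewrite -sqrtr_sqr ler_wsqrtr //; exact: CS.
have -> : \sum_i (x + y) 0 i ^+ 2 =
   \sum_i x 0 i ^+ 2 + 2 * \sum_i x 0 i * y 0 i + \sum_i y 0 i ^+ 2.
  rewrite mulr_sumr -!big_split /=; apply: eq_bigr => i _; rewrite mxE; ring.
rewrite -!enorm2; set s := \sum_i _ in S *; nra.
Qed.


Lemma sumsq_le_const (v : pt) (c : R) : (forall i, `|v 0 i| <= c) ->
  \sum_i v 0 i ^+ 2 <= (n.+1)%:R * c ^+ 2.
Proof.
move=> H; apply: le_trans (_ : \sum_(i < n.+1) c ^+ 2 <= _).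
  apply: ler_sum => i _; rewrite -real_normK ?num_real //.
  by rewrite lerXn2r // ?nnegrE ?normr_ge0 // (le_trans _ (H i)).
by rewrite sumr_const card_ord mulr_natl.
Qed.

Lemma enorm_nbhs (p : pt) (d : R) : 0 < d -> nbhs p [set x | enorm (x - p) < d].
Proof.
move=> d0; apply/nbhs_ballP; exists (d / (n.+2)%:R) => /=.
  by rewrite divr_gt0 // ltr0n.
move=> x [_ Hx]; rewrite /enorm /=.
have Hc : forall i, `|(x - p) 0 i| <= d / (n.+2)%:R.
  move=> i; have := Hx 0 i; rewrite /ball /= !mxE distrC => h; exact: ltW h.
have h := @sumsq_le_const _ _ Hc.
rewrite -(ger0_norm (ltW d0)) -sqrtr_sqr ltr_sqrt ?exprn_gt0 //.
apply: le_lt_trans h _.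
have n2 : 0 < (n.+2)%:R :> R by rewrite ltr0n.
rewrite expr_div_n mulrA ltr_pdivrMr ?exprn_gt0 // mulrC ltr_pM2l ?exprn_gt0 //.
rewrite -natrX ltr_nat; nia.
Qed.

Definition Box : set pt := [set v | forall i, `[-1, 1]%classic (v ord0 i)].

Lemma Box_compact : compact Box.
Proof. have := @rV_compact R n.+1 (fun _ => `[-1, 1]%classic). move=> h. apply: h => _; exact: segment_compact. Qed.

Lemma cluster_ex (S : R -> set pt) :
  (forall d, 0 < d -> S d !=set0) ->
  (forall d1 d2, 0 < d1 -> d1 <= d2 -> S d1 `<=` S d2) ->
  (forall d x, 0 < d -> S d x -> enorm x <= 1) ->
  exists p : pt, forall d e, 0 < d -> 0 < e ->
    exists x, S d x /\ enorm (x - p) < e.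
Proof.
move=> Sne Smono Sb.
pose F := filter_from [set d : R | 0 < d] S.
have FF : Filter F.
  apply: filter_from_filter; first by exists 1; rewrite /= ltr01.
  move=> i j i0 j0; exists (Order.min i j); first by rewrite /= lt_min i0 j0.
  move=> x Hx; split.
    by apply: (Smono (Order.min i j)) Hx; rewrite ?lt_min ?i0 ?j0 ?ge_min ?lexx.
  by apply: (Smono (Order.min i j)) Hx; rewrite ?lt_min ?i0 ?j0 ?ge_min ?lexx ?orbT.
have PF : ProperFilter F by apply: filter_from_proper.
have FB : F Box.
  exists 1 => //= x Sx i; have := coord_le_enorm x i.
  move=> h; have := Sb 1 x ltr01 Sx => h2.
  rewrite /= in_itv /= -ler_norml; exact: le_trans h h2.
have [p [_ Cp]] := Box_compact F PF FB.
exists p => d e d0 e0.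
have [x [Sx Ex]] := Cp (S d) _ (ltac:(by exists d)) (@enorm_nbhs p e e0).
by exists x.
Qed.


Lemma dist_ge0 x y : 0 <= dist'2 x y.
Proof. by apply: sumr_ge0 => i _; rewrite sqr_ge0. Qed.

Lemma dist_xx x : dist'2 x x = 0.
Proof. by rewrite /dist'2 big1 // => i _; rewrite subrr expr0n. Qed.

Lemma dist_tr z a b : dist'2 z (z - (a - b)) = dist'2 a b.
Proof. by apply: eq_bigr => i _; rewrite !mxE opprD opprK addrA subrr add0r. Qed.

Lemma xn_tr z a b : xn a = xn b -> xn (z - (a - b)) = xn z.
Proof. by rewrite /xn !mxE => ->; rewrite subrr oppr0 addr0. Qed.

Lemma enorm_dist x y : xn x = xn y -> enorm (x - y) = Num.sqrt (dist'2 x y).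
Proof.
move=> E; rewrite /enorm /dist'2 (bigD1 ord_max) //= !mxE.
by rewrite -/(xn x) -/(xn y) E subrr expr0n add0r; congr Num.sqrt; apply: eq_bigr => i _; rewrite !mxE.
Qed.

Lemma dist_lip x y x' y' : enorm x <= 1 -> enorm y <= 1 -> enorm x' <= 1 ->
  enorm y' <= 1 ->
  dist'2 x y - dist'2 x' y' <= 4 * (n.+1)%:R * (enorm (x - x') + enorm (y - y')).
Proof.
move=> hx hy hx' hy'.
set E := enorm (x - x') + enorm (y - y').
have E0 : 0 <= E by rewrite addr_ge0 // enorm_ge0.
rewrite /dist'2 -sumrB.
apply: le_trans (_ : \sum_(i < n.+1 | i != ord_max) (4 * E) <= _).
  apply: ler_sum => i _.
  set a := x 0 i - y 0 i; set b := x' 0 i - y' 0 i.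
  have -> : a ^+ 2 - b ^+ 2 = (a - b) * (a + b) by ring.
  apply: le_trans (ler_norm _) _; rewrite normrM mulrC.
  apply: ler_pM; rewrite ?normr_ge0 //.
    rewrite /a /b.
    have e1 := coord_le_enorm x i; have e2 := coord_le_enorm y i.
    have e3 := coord_le_enorm x' i; have e4 := coord_le_enorm y' i.
    have f1 := le_trans e1 hx; have f2 := le_trans e2 hy.
    have f3 := le_trans e3 hx'; have f4 := le_trans e4 hy'.
    move: f1 f2 f3 f4; rewrite !ler_norml => /andP[g1 g2] /andP[g3 g4] /andP[g5 g6] /andP[g7 g8].
    apply/andP; split; lra.
  have -> : a - b = (x - x') 0 i - (y - y') 0 i.
    by rewrite /a /b !mxE; ring.
  apply: le_trans (ler_normD _ _) _; rewrite normrN lerD //; exact: coord_le_enorm.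
rewrite big_mkcond /=.
apply: le_trans (_ : \sum_(i < n.+1) (4 * E) <= _).
  by apply: ler_sum => i _; case: ifP => // _; rewrite mulr_ge0.
by rewrite sumr_const card_ord -mulr_natr le_eqVlt; apply/orP; left; apply/eqP; ring.
Qed.

Variables (u : pt -> R) (rho eps S : R).
Hypotheses (hrho0 : 0 < rho) (hrho1 : rho < 1) (heps : 0 < eps).
Hypothesis hS : forall x, eball 0 1 x -> `|u x| <= S.
Hypothesis husc : usc_on (eball 0 1) u.

Let G x y := u x - dist'2 x y / eps.

Lemma K_B1 x : ecball 0 rho x -> eball 0 1 x /\ enorm x <= rho.
Proof.
rewrite /ecball /eball /= subr0 => h; split => //; exact: le_lt_trans h hrho1.
Qed.

Lemma G_le x y : ecball 0 rho x -> G x y <= S.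
Proof.
move=> /K_B1 [h _]; rewrite /G.
have := hS x h => h2; have := dist_ge0 x y => h3.
have h4 : 0 <= dist'2 x y / eps by rewrite divr_ge0 // ltW.
have := ler_norm (u x); lra.
Qed.

Lemma uenv_hs y : (exists x, ecball 0 rho x /\ xn x = xn y) ->
  has_sup [set u x - dist'2 x y / eps |
         x in [set x | ecball 0 rho x /\ xn x = xn y]].
Proof.
move=> [x hx]; split; first by exists (G x y); exists x.
by exists S => _ [z [hz _] <-]; exact: G_le.
Qed.

Lemma uenv_ge y x : ecball 0 rho x -> xn x = xn y -> G x y <= uenv u rho eps y.
Proof.
move=> hx e; have hs := uenv_hs y (ex_intro _ x (conj hx e)).
by rewrite /uenv; apply: (sup_upper_bound hs); exists x.
Qed.

Lemma uenv_adh y d : 0 < d -> (exists x, ecball 0 rho x /\ xn x = xn y) ->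
  exists x, [/\ ecball 0 rho x, xn x = xn y & uenv u rho eps y - d < G x y].
Proof.
move=> d0 ex; have [z [x [hx e] <-] hz] := sup_adherent d0 (uenv_hs y ex).
by exists x.
Qed.

Lemma limit_point y a : enorm y < 1 ->
  (forall d, 0 < d -> exists y' x', [/\ enorm y' < 1, enorm (y' - y) < d,
      ecball 0 rho x', xn x' = xn y' & a - d < G x' y']) ->
  exists p, [/\ ecball 0 rho p, xn p = xn y & a <= G p y].
Proof.
move=> hy H.
pose Sd d := [set x' | exists y', [/\ enorm y' < 1, enorm (y' - y) < d,
      ecball 0 rho x', xn x' = xn y' & a - d < G x' y']].
have C1 : forall d, 0 < d -> Sd d !=set0.
  by move=> d d0; have [y' [x' h]] := H d d0; exists x', y'.
have C2 : forall d1 d2, 0 < d1 -> d1 <= d2 -> Sd d1 `<=` Sd d2.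
  move=> d1 d2 d10 d12 x [y' [h1 h2 h3 h4 h5]]; exists y'; split => //.
    exact: lt_le_trans h2 d12.
  by apply: le_lt_trans h5; rewrite lerB.
have C3 : forall d x, 0 < d -> Sd d x -> enorm x <= 1.
  move=> d x d0 [y' [_ _ h3 _ _]]; have [_ h] := K_B1 x h3.
  exact: le_trans h (ltW hrho1).
have [p Hp] := cluster_ex Sd C1 C2 C3.
have hp1 : enorm p <= rho.
  rewrite leNgt; apply/negP => hlt.
  have [x [[y' [_ _ hx _ _]] hxp]] := Hp 1 (enorm p - rho) ltr01 (ltac:(by rewrite subr_gt0)).
  have [_ hx'] := K_B1 x hx.
  have := enormD x (p - x); rewrite addrC subrK enormB; lra.
have hp2 : xn p = xn y.
  apply/eqP; rewrite -subr_eq0; apply/negP => /negP hne.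
  set q := `|xn p - xn y|.
  have q0 : 0 < q by rewrite normr_gt0.
  have [x [[y' [_ h2 _ h4 _]] hxp]] := Hp (q / 2) (q / 2) (ltac:(by rewrite divr_gt0)) (ltac:(by rewrite divr_gt0)).
  have c1 := le_lt_trans (coord_le_enorm (x - p) ord_max) hxp.
  have c2 := le_lt_trans (coord_le_enorm (y' - y) ord_max) h2.
  move: c1 c2; rewrite !mxE -/(xn x) -/(xn p) -/(xn y') -/(xn y) h4.
  rewrite !ltr_norml => /andP[c1 c1'] /andP[c2 c2'].
  have : q < q.
    rewrite {1}/q ltr_norml; apply/andP; split; lra.
  by rewrite ltxx.
exists p; split => //; first by rewrite /ecball /= subr0.
rewrite leNgt; apply/negP => hlt.
set eta := a - G p y.
have eta0 : 0 < eta by rewrite subr_gt0.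
have pB1 : eball 0 1 p by rewrite /eball /= subr0; exact: le_lt_trans hp1 hrho1.
have e40 : 0 < eta / 4 by rewrite divr_gt0.
have [d1 d10 Hd1] := husc p pB1 (eta / 4) e40.
set N := (n.+1)%:R : R.
have N0 : 0 < N by rewrite ltr0n.
set d2 := eta * eps / (32 * N).
have d20 : 0 < d2 by rewrite /d2 !divr_gt0 ?mulr_gt0 // ltr0n.
have dd0 : 0 < Num.min d2 (eta / 4) by rewrite lt_min d20 divr_gt0.
have ee0 : 0 < Num.min d1 d2 by rewrite lt_min d20 d10.
have [x [[y' [hy' h2 hx h4 h5]] hxp]] := Hp _ _ dd0 ee0.
have [xB1 xr] := K_B1 x hx.
have hux : u x < u p + eta / 4.
  apply: Hd1 => //; apply: lt_le_trans hxp _; rewrite ge_min lexx //.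
have hL := dist_lip p y x y'.
have hL' : dist'2 p y - dist'2 x y' <= 4 * N * (enorm (p - x) + enorm (y - y')).
  apply: hL; [exact: le_trans hp1 (ltW hrho1) | exact: ltW | exact: le_trans xr (ltW hrho1) | exact: ltW].
have e1 : enorm (p - x) < d2.
  rewrite enormB; apply: lt_le_trans hxp _; rewrite ge_min lexx orbT //.
have e2 : enorm (y - y') < d2.
  rewrite enormB; apply: lt_le_trans h2 _; rewrite ge_min lexx //.
have e3 : 4 * N * (enorm (p - x) + enorm (y - y')) <= eta * eps / 4.
  have -> : eta * eps / 4 = 4 * N * (2 * d2).
    rewrite /d2; field; have := ler0n R n; rewrite gt_eqF //; lra.
  rewrite ler_pM2l ?mulr_gt0 //; lra.
have e4 : dist'2 p y / eps - dist'2 x y' / eps <= eta / 4.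
  rewrite -mulrBl ler_pdivrMr // mulrAC.
  apply: le_trans hL' _; apply: le_trans e3 _; rewrite le_eqVlt; apply/orP; left; apply/eqP; field => //.
have e5 : a - eta / 4 <= a - Num.min d2 (eta / 4).
  by rewrite lerB // ge_min lexx orbT.
have : G x y' < G p y + eta / 2.
  rewrite /G; lra.
move=> h6; move: h5 e5 h6; rewrite /eta; lra.

Qed.

Lemma tri_le x y : enorm y <= enorm x + enorm (y - x).
Proof. by have := enormD x (y - x); rewrite [x + _]addrC subrK. Qed.

Lemma uenv_attain y : ecball 0 rho y ->
  exists xs, [/\ ecball 0 rho xs, xn xs = xn y & G xs y = uenv u rho eps y].
Proof.
move=> hy; have [_ hy'] := K_B1 y hy.
have hy1 : enorm y < 1 by exact: le_lt_trans hy' hrho1.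
have ex : exists x, ecball 0 rho x /\ xn x = xn y := ex_intro _ y (conj hy erefl).
have HH : forall d, 0 < d -> exists y' x', [/\ enorm y' < 1, enorm (y' - y) < d,
      ecball 0 rho x', xn x' = xn y' & uenv u rho eps y - d < G x' y'].
  move=> d d0; have [x [h1 h2 h3]] := uenv_adh y d d0 ex.
  by exists y, x; split => //; rewrite subrr enorm0.
have [p [hp1 hp2 hp3]] := limit_point y (uenv u rho eps y) hy1 HH.
exists p; split => //; apply/eqP; rewrite eq_le hp3 andbT; exact: uenv_ge.
Qed.

Lemma uenv_usc r : r <= rho -> usc_on (eball 0 r) (uenv u rho eps).
Proof.
move=> hr y hy e e0.
have hyK : ecball 0 rho y.
  by move: hy; rewrite /eball /ecball /= => h; exact: ltW (lt_le_trans h hr).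
have [_ hy'] := K_B1 y hyK.
have hy1 : enorm y < 1 by exact: le_lt_trans hy' hrho1.
apply: contrapT => hno.
have H : forall d, 0 < d -> exists y', [/\ eball 0 r y', enorm (y' - y) < d &
    uenv u rho eps y + e <= uenv u rho eps y'].
  move=> d d0; apply: contrapT => hn; apply: hno; exists d => // y' hy2 hd.
  by rewrite ltNge; apply/negP => hge; apply: hn; exists y'; split.
have e20 : 0 < e / 2 by rewrite divr_gt0.
have HH : forall d, 0 < d -> exists y' x', [/\ enorm y' < 1, enorm (y' - y) < d,
      ecball 0 rho x', xn x' = xn y' & uenv u rho eps y + e / 2 - d < G x' y'].
  move=> d d0; have [y' [h1 h2 h3]] := H d d0.
  have hy'K : ecball 0 rho y'.
    by move: h1; rewrite /eball /ecball /= => h; exact: ltW (lt_le_trans h hr).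
  have [x [hx1 hx2 hx3]] := uenv_adh y' (e / 2) e20 (ex_intro _ y' (conj hy'K erefl)).
  exists y', x; split => //.
    have [_ h] := K_B1 y' hy'K; exact: le_lt_trans h hrho1.
  lra.
have [p [hp1 hp2 hp3]] := limit_point y (uenv u rho eps y + e / 2) hy1 HH.
have := uenv_ge y p hp1 hp2; lra.
Qed.

Lemma transfer r reps x0 phi d : r <= rho - reps ->
  Num.sqrt (2 * eps * S) <= reps -> eball 0 r x0 -> 0 < d ->
  touches_above (eball 0 r) (uenv u rho eps) phi x0 d ->
  exists xs d2, [/\ 0 < d2 /\ d2 <= d, xn xs = xn x0, enorm (xs - x0) <= reps,
     enorm xs < 1 &
     touches_above (eball 0 1) u (fun z => phi (z - (xs - x0)) + dist'2 xs x0 / eps) xs d2].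
Proof.
move=> hr hreps hx0 d0 [t1 t2].
have reps0 : 0 <= reps by exact: le_trans (sqrtr_ge0 _) hreps.
have hx0' : enorm x0 < r by move: hx0; rewrite /eball /= subr0.
have hx0K : ecball 0 rho x0 by rewrite /ecball /= subr0; lra.
have [xs [hxs1 hxs2 hxs3]] := uenv_attain x0 hx0K.
have g0 : u x0 <= uenv u rho eps x0.
  have := uenv_ge x0 x0 hx0K erefl; by rewrite /G dist_xx mul0r subr0.
have [xsB xsr] := K_B1 xs hxs1; have [x0B _] := K_B1 x0 hx0K.
have key : dist'2 xs x0 <= 2 * eps * S.
  have h1 := hS xs xsB; have h2 := hS x0 x0B.
  have : dist'2 xs x0 / eps <= 2 * S.
    move: hxs3 g0; rewrite /G => <-.
    have := ler_norm (u xs); have := ler_norm (- u x0); rewrite normrN; lra.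
  by rewrite ler_pdivrMr // mulrAC.
have hdist : enorm (xs - x0) <= reps.
  by rewrite enorm_dist //; apply: le_trans hreps; exact: ler_wsqrtr.
have hxs : enorm xs < rho.
  have := tri_le x0 xs; lra.
set d2 := Num.min d (Num.min (r - enorm x0) (rho - enorm xs)).
have d20 : 0 < d2 by rewrite !lt_min d0 !subr_gt0 hx0' hxs.
have d2d : d2 <= d by rewrite ge_min lexx.
have d2r : d2 <= r - enorm x0 by rewrite /d2 !ge_min lexx orbT.
have d2rho : d2 <= rho - enorm xs by rewrite /d2 !ge_min lexx !orbT.
exists xs, d2; split; [by split | exact: hxs2 | exact: hdist | exact: lt_trans hxs hrho1 | split].
  by rewrite /= subKr t1 -hxs3 /G subrK.
move=> z hz1 hz2.
set w := z - (xs - x0).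
have ew : w - x0 = z - xs by rewrite /w opprB [x0 - xs]addrC addrA addrK.
have hz2' : enorm (z - xs) < d2 by exact: hz2.
have hw1 : eball 0 r w.
  rewrite /eball /= subr0; have := tri_le x0 w; rewrite ew; lra.
have hw2 : eball x0 d w by rewrite /eball /= ew; lra.
have hzK : ecball 0 rho z.
  rewrite /ecball /= subr0; have := tri_le xs z; lra.
have := uenv_ge w z hzK (esym (xn_tr z xs x0 hxs2)).
rewrite /G /w dist_tr -/w.
have := t2 w hw1 hw2; lra.
Qed.


Lemma quot_tr (f : pt -> R) a c x v :
  (fun h : R => h^-1 *: (((fun z => f (z - a) + c) \o shift x) (h *: v) - (f (x - a) + c))) =
  (fun h : R => h^-1 *: ((f \o shift (x - a)) (h *: v) - f (x - a))).
Proof.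
apply: funext => h /=; congr (_ *: _).
by rewrite -[h *: v + x - a]addrA; ring.
Qed.

Lemma derive_tr (f : pt -> R) a c x v :
  derive (fun z => f (z - a) + c) x v = derive f (x - a) v.
Proof. by rewrite /derive quot_tr. Qed.

Lemma derivable_tr (f : pt -> R) a c x v :
  derivable f (x - a) v -> derivable (fun z => f (z - a) + c) x v.
Proof. by rewrite /derivable quot_tr. Qed.

Lemma pderiv_tr i (f : pt -> R) a c :
  pderiv i (fun z => f (z - a) + c) = (fun z => pderiv i f (z - a) + 0).
Proof. by apply: funext => z; rewrite /pderiv derive_tr addr0. Qed.

Lemma cont_tr (f : pt -> R) a x :
  {for x - a, continuous f} -> {for x, continuous (fun z => f (z - a))}.
Proof.
move=> hf.
have hc : {for x, continuous (fun z : pt => z - a)}.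
  have := @cvgB _ _ _ (nbhs x) _ (fun z : pt => z) (fun _ => a) x a cvg_id (cvg_cst a).
  by move=> h; apply: h.
exact: (continuous_comp hc hf).
Qed.

Lemma C2_tr (U V : set pt) (f : pt -> R) a c :
  C2_on U f -> (forall z, V z -> U (z - a)) ->
  C2_on V (fun z => f (z - a) + c).
Proof.
move=> hf hUV x hx i j; have [h1 [h2 h3]] := hf _ (hUV _ hx) i j.
split; first exact: derivable_tr.
rewrite pderiv_tr; split; first exact: derivable_tr.
rewrite pderiv_tr.
have -> : (fun z => pderiv j (pderiv i f) (z - a) + 0) = (fun z => pderiv j (pderiv i f) (z - a)) by apply: funext => z; rewrite addr0.
exact: cont_tr.
Qed.

Lemma hessian_tr (f : pt -> R) a c x :
  hessian (fun z => f (z - a) + c) x = hessian f (x - a).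
Proof.
apply/matrixP => i j; rewrite !mxE pderiv_tr pderiv_tr addr0. by [].
Qed.


Lemma cont_trc (f : pt -> R) a c x :
  {for x - a, continuous f} -> {for x, continuous (fun z => f (z - a) + c)}.
Proof.
move=> hf.
have := @cvgD _ _ _ (nbhs x) _ (fun z => f (z - a)) (fun _ => c) _ _ (cont_tr f a x hf) (cvg_cst c).
by move=> h; apply: h.
Qed.

Lemma tr_sub z xs x0 : (z - (xs - x0)) - x0 = z - xs.
Proof. by rewrite opprB [x0 - xs]addrC addrA addrK. Qed.

Lemma mod_le (D : set pt) (h : pt -> R) dd m x y :
  (forall x y, D x -> D y -> enorm (x - y) < dd -> `|h x - h y| < 1) ->
  m < dd -> D x -> D y -> enorm (x - y) <= m -> h x - modulus D h m <= h y.
Proof.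
move=> hu hm Dx Dy hxy.
have hs : has_sup [set z | exists x y, [/\ D x, D y, enorm (x - y) <= m & z = `|h x - h y| ]].
  split; first by exists `|h x - h y|; exists x, y.
  exists 1 => _ [a [b [Da Db hab ->]]]; apply: ltW; apply: hu => //; exact: le_lt_trans hab hm.
have := sup_upper_bound hs (ltac:(by exists x, y)).
rewrite -/(modulus D h m) => h1.
have := ler_norm (h x - h y); lra.
Qed.

End Aux.

Theorem mainTheorem11 (R : realType) (n : nat) (lam Lam : R)
  (Fp Fm : 'M[R]_n.+1 -> R) (fp fm g u : 'rV[R]_n.+1 -> R) (rho : R) :
  0 < lam -> lam <= Lam ->
  elliptic lam Lam Fp -> elliptic lam Lam Fm ->
  unif_cont_on (Bplus 1) fp -> unif_cont_on (Bminus 1) fm ->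
  unif_cont_on (Tflat 1) g ->
  (exists M : R, forall x, eball 0 1 x -> `|u x| <= M) ->
  visc_sub Fp Fm fp fm g 1 u ->
  0 < rho -> rho < 1 ->
  exists2 eps0 : R, 0 < eps0 &
    forall eps : R, 0 < eps -> eps < eps0 ->
      let reps := Num.sqrt (2 * eps * supnorm1 u) in
      forall r : R, r <= rho - reps ->
        visc_sub Fp Fm
          (fun x => fp x - modulus (Bplus 1) fp reps)
          (fun x => fm x - modulus (Bminus 1) fm reps)
          (fun x => g x - modulus (Tflat 1) g reps)
          r (uenv u rho eps).
Proof.
move=> _ _ _ _ ucp ucm ucg [M HM] [husc [Hp [Hm Hg]]] rho0 rho1.
set S := supnorm1 u.
have hS : forall x, eball 0 1 x -> `|u x| <= S.
  have hs : has_sup [set `|u x| | x in eball 0 1].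
    split; first by exists `|u 0|; exists 0 => //; rewrite /eball /= subr0 enorm0.
    by exists M => _ [x hx <-]; exact: HM.
  by move=> x hx; apply: (sup_upper_bound hs); exists x.
have S0 : 0 <= S.
  by apply: le_trans (hS 0 _); rewrite ?normr_ge0 // /eball /= subr0 enorm0.
have [dp dp0 Hdp] := ucp 1 ltr01.
have [dm dm0 Hdm] := ucm 1 ltr01.
have [dg dg0 Hdg] := ucg 1 ltr01.
set dd := Num.min dp (Num.min dm dg).
have dd0 : 0 < dd by rewrite !lt_min dp0 dm0 dg0.
have ddp : dd <= dp by rewrite ge_min lexx.
have ddm : dd <= dm by rewrite /dd !ge_min lexx orbT.
have ddg : dd <= dg by rewrite /dd !ge_min lexx !orbT.
have S10 : 0 < 2 * (S + 1) by rewrite mulr_gt0 // ltr_wpDl.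
exists (dd ^+ 2 / (2 * (S + 1))); first by rewrite divr_gt0 // exprn_gt0.
move=> eps eps0 epsl reps r hr.
have hreps : reps < dd.
  rewrite /reps -(ger0_norm (ltW dd0)) -sqrtr_sqr ltr_sqrt ?exprn_gt0 //.
  move: epsl; rewrite ltr_pdivlMr // => h.
  apply: le_lt_trans h; rewrite -mulrA mulrCA ler_pM2l //; lra.
have reps0 : 0 <= reps by exact: sqrtr_ge0.
have hrrho : r <= rho by lra.
have Hrep : Num.sqrt (2 * eps * S) <= reps by [].
split; first exact: (@uenv_usc R n u rho eps S rho1 eps0 hS husc r hrrho).
split.
  move=> x0 phi d [hx0 hx0n] d0 hC2 ht.
  have hx0b : eball 0 r x0 by rewrite /eball /= subr0.
  have [xs [d2 [[d20 d2d] hxn hdist hxs1 ht2]]] :=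
    @transfer R n u rho eps S rho1 eps0 hS husc r reps x0 phi d hr Hrep hx0b d0 ht.
  have hB : Bplus 1 xs by split => //; rewrite hxn.
  have hmap : forall z, eball xs d2 z -> eball x0 d (z - (xs - x0)).
    by move=> z hz; rewrite /eball /= tr_sub; exact: lt_le_trans hz d2d.
  have := Hp xs _ d2 hB d20 (@C2_tr R n _ _ _ (xs - x0) (dist'2 xs x0 / eps) hC2 hmap) ht2.
  rewrite hessian_tr subKr => h.
  apply: le_trans h.
  apply: (@mod_le R n _ _ _ _ _ _ Hdp) => //; [exact: lt_le_trans hreps ddp | split => //; lra | by rewrite enormB].
split.
  move=> x0 phi d [hx0 hx0n] d0 hC2 ht.
  have hx0b : eball 0 r x0 by rewrite /eball /= subr0.
  have [xs [d2 [[d20 d2d] hxn hdist hxs1 ht2]]] :=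
    @transfer R n u rho eps S rho1 eps0 hS husc r reps x0 phi d hr Hrep hx0b d0 ht.
  have hB : Bminus 1 xs by split => //; rewrite hxn.
  have hmap : forall z, eball xs d2 z -> eball x0 d (z - (xs - x0)).
    by move=> z hz; rewrite /eball /= tr_sub; exact: lt_le_trans hz d2d.
  have := Hm xs _ d2 hB d20 (@C2_tr R n _ _ _ (xs - x0) (dist'2 xs x0 / eps) hC2 hmap) ht2.
  rewrite hessian_tr subKr => h.
  apply: le_trans h.
  apply: (@mod_le R n _ _ _ _ _ _ Hdm) => //; [exact: lt_le_trans hreps ddm | split => //; lra | by rewrite enormB].
move=> x0 phi d psip psim d' [hx0 hx0n] d0 dd' hcont hC2p hpp hC2m hmm ht.
have hx0b : eball 0 r x0 by rewrite /eball /= subr0.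
have [xs [d2 [[d20 d2d] hxn hdist hxs1 ht2]]] :=
  @transfer R n u rho eps S rho1 eps0 hS husc r reps x0 phi d hr Hrep hx0b d0 ht.
set c := dist'2 xs x0 / eps.
have hmapc : forall z, ecball xs d2 z -> ecball x0 d (z - (xs - x0)).
  by move=> z hz; rewrite /ecball /= tr_sub; exact: le_trans hz d2d.
have hmap' : forall z, eball xs d' z -> eball x0 d' (z - (xs - x0)).
  by move=> z hz; rewrite /eball /= tr_sub.
have hT : Tflat 1 xs by split => //; rewrite hxn.
have hcont' : {in eball xs d2, continuous (fun z : 'rV[R]_n.+1 => phi (z - (xs - x0)) + c)}.
  move=> z; rewrite in_setE => hz; apply: cont_trc; apply: hcont.
  by rewrite in_setE /eball /= tr_sub; exact: lt_le_trans hz d2d.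
have hpp' : forall y, ecball xs d2 y -> 0 <= xn y ->
    phi (y - (xs - x0)) + c = psip (y - (xs - x0)) + c.
  by move=> y hy hy0; rewrite hpp //; [exact: (hmapc y hy) | rewrite (@xn_tr R n y xs x0 hxn)].
have hmm' : forall y, ecball xs d2 y -> xn y <= 0 ->
    phi (y - (xs - x0)) + c = psim (y - (xs - x0)) + c.
  by move=> y hy hy0; rewrite hmm //; [exact: (hmapc y hy) | rewrite (@xn_tr R n y xs x0 hxn)].
have := Hg xs _ d2 _ _ d' hT d20 (le_lt_trans d2d dd') hcont'
  (@C2_tr R n _ _ _ (xs - x0) c hC2p hmap') hpp'
  (@C2_tr R n _ _ _ (xs - x0) c hC2m hmap') hmm' ht2.
rewrite !pderiv_tr subKr !addr0 => h.
apply: le_trans h.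
apply: (@mod_le R n _ _ _ _ _ _ Hdg) => //; [exact: lt_le_trans hreps ddg | split => //; lra | by rewrite enormB].
Qed.
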